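(* Let $D$ be a diagram of a link $L$, fix $a^*\in A(D)$, and let $M_0$ be the $\Lambda$-submodule of $M_A^{red}(L)$ generated by the elements $(\gamma_D(a)-\gamma_D(a^* ))\otimes1$, $a\in A(D)$. Then there is a $\Lambda$-linear epimorphism $e_D:M_0\to Dis(MQ(L))$ with $e_D((\gamma_D(a)-\gamma_D(a^* ))\otimes1)=d_a=\beta_a\beta_{a^*}^{-1}$ for all $a\in A(D)$, where $Dis(MQ(L))$ carries the $\Lambda$-module structure $m\cdot d=d^m$, $t^n\cdot d=\beta_{a^*}^nd\beta_{a^*}^{-n}$ ($m,n\in\mathbb Z$), written additively.
   Context: Let $L=K_1\cup\dots\cup K_\mu$ be an oriented classical link with diagram $D$. $A(D)$ is the set of arcs of $D$ and $C(D)$ the set of crossings; $\kappa_D:A(D)\to\{1,\dots,\mu\}$ sends an arc to the index of its component. At a crossing $c$, $a_1$ is the overpassing arc, $a_2$ the underpassing arc on the right of $a_1$ (with respect to the orientation of $a_1$), $a_3$ the underpassing arc on the left of $a_1$. $\Lambda_\mu=\mathbb Z[t_1^{\pm1},\dots,t_\mu^{\pm1}]$, $\Lambda=\mathbb Z[t^{\pm1}]$, $\tau:\Lambda_\mu\to\Lambda$ the ring homomorphism with $\tau(t_i)=t$, making $\Lambda$ a $\Lambda_\mu$-module. $\rho_D:\Lambda_\mu^{C(D)}\to\Lambda_\mu^{A(D)}$ is the $\Lambda_\mu$-linear map with $\rho_D(c)=(1-t_{\kappa_D(a_2)})a_1+t_{\kappa_D(a_1)}a_2-a_3$; $M_A(L)=\operatorname{coker}\rho_D$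 with quotient map $\gamma_D$; $M_A^{red}(L)=M_A(L)\otimes_{\Lambda_\mu}\Lambda$. A quandle is a set $Q$ with a binary operation $\triangleright$ such that $x\triangleright x=x$, each translation $\beta_y(x)=x\triangleright y$ is a bijection, and $(x\triangleright y)\triangleright z=(x\triangleright z)\triangleright(y\triangleright z)$; it is medial if $(w\triangleright x)\triangleright(y\triangleright z)=(w\triangleright y)\triangleright(x\triangleright z)$. The displacement group $Dis(Q)$ is the subgroup of the automorphism group of $Q$ generated by all $\beta_y\beta_z^{-1}$ (abelian for medial $Q$). $MQ(L)$ is the medial quandle generated by $A(D)$ subject to $a_2\triangleright a_1=a_3$ at every crossing. *)

(* Defs.v *)
(* All objects are given by the universal properties that
   define them in the paper (presentations / extension of scalars), so that no
   (multivariate) Laurent polynomial ring is needed. *)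
From HB Require Import structures.
From mathcomp Require Import all_boot all_algebra.
Set Implicit Arguments. Unset Strict Implicit. Unset Printing Implicit Defensive.
Import GRing.Theory.
Local Open Scope ring_scope.

(* arcs A(D), crossings C(D), kappa_D, and at each crossing c:
   over c = a_1 (overpassing arc), under_r c = a_2 (underpassing arc on the
   right of a_1), under_l c = a_3 (underpassing arc on the left of a_1). *)
Record diagram (mu : nat) := Diagram {
  d_arc : finType;
  d_crossing : finType;
  kappa : d_arc -> 'I_mu;
  over : d_crossing -> d_arc;
  under_r : d_crossing -> d_arc;
  under_l : d_crossing -> d_arc }.

Definition additive_map (V W : zmodType) (f : V -> W) : Prop :=
  forall x y, f (x + y) = f x + f y.

(* A Lambda = Z[t^{+-1}]-module is an abelian group with an automorphism t. *)
Definition is_Lmod (V : zmodType) (t : V -> V) : Prop :=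
  additive_map t /\ bijective t.

(* A Lambda_mu = Z[t_1^{+-1},...,t_mu^{+-1}]-module is an abelian group with
   mu pairwise commuting automorphisms. *)
Definition is_Lmu_mod (mu : nat) (V : zmodType) (ts : 'I_mu -> V -> V) : Prop :=
  (forall i, is_Lmod (ts i)) /\ (forall i j x, ts i (ts j x) = ts j (ts i x)).

Definition rel_MA (mu : nat) (D : diagram mu) (V : zmodType)
    (ts : 'I_mu -> V -> V) (g : d_arc D -> V) : Prop :=
  forall c : d_crossing D,
    g (over c) - ts (kappa (under_r c)) (g (over c))
    + ts (kappa (over c)) (g (under_r c)) - g (under_l c) = 0.

(* (M, ts, gamma) is M_A(L) = coker rho_D with quotient map gamma_D:
   the Lambda_mu-module presented by generators A(D) and relations rho_D(c). *)
Definition is_MA (mu : nat) (D : diagram mu) (M : zmodType)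
    (ts : 'I_mu -> M -> M) (gamma : d_arc D -> M) : Prop :=
  is_Lmu_mod ts /\ rel_MA ts gamma /\
  forall (W : zmodType) (ws : 'I_mu -> W -> W) (g : d_arc D -> W),
    is_Lmu_mod ws -> rel_MA ws g ->
    exists f : M -> W,
      [/\ additive_map f, (forall i x, f (ts i x) = ws i (f x)),
          (forall a, f (gamma a) = g a) &
          (forall f' : M -> W, additive_map f' ->
             (forall i x, f' (ts i x) = ws i (f' x)) ->
             (forall a, f' (gamma a) = g a) -> f' =1 f)].

(* (N, t, phi) is M (x)_{Lambda_mu} Lambda, Lambda a Lambda_mu-module via
   tau (t_i |-> t), with phi x = x (x) 1: universal property of extension
   of scalars along tau. *)
Definition is_base_change (mu : nat) (M : zmodType) (ts : 'I_mu -> M -> M)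
    (N : zmodType) (t : N -> N) (phi : M -> N) : Prop :=
  [/\ is_Lmod t, additive_map phi, (forall i x, phi (ts i x) = t (phi x)) &
  forall (W : zmodType) (tw : W -> W) (psi : M -> W),
    is_Lmod tw -> additive_map psi -> (forall i x, psi (ts i x) = tw (psi x)) ->
    exists f : N -> W,
      [/\ additive_map f, (forall x, f (t x) = tw (f x)),
          (forall x, f (phi x) = psi x) &
          (forall f' : N -> W, additive_map f' ->
             (forall x, f' (t x) = tw (f' x)) ->
             (forall x, f' (phi x) = psi x) -> f' =1 f)]].

Definition submod_gen (N : zmodType) (t : N -> N) (S : N -> Prop) (x : N) : Prop :=
  forall P : N -> Prop,
    (forall y, S y -> P y) -> P 0 ->
    (forall y z, P y -> P z -> P (y - z)) ->
    (forall y, P y -> P (t y)) ->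
    (forall y, P (t y) -> P y) ->
    P x.

Section Quandles.
Variables (Q : Type) (op : Q -> Q -> Q).

Definition beta (y : Q) : Q -> Q := fun x => op x y.

Definition is_quandle : Prop :=
  [/\ (forall x, op x x = x), (forall y, bijective (beta y)) &
      (forall x y z, op (op x y) z = op (op x z) (op y z))].

Definition is_medial : Prop :=
  forall w x y z, op (op w x) (op y z) = op (op w y) (op x z).

(* Dis(Q): the subgroup of Aut(Q) generated by all beta_y beta_z^{-1}
   (functions compared extensionally). *)
Definition Dis (f : Q -> Q) : Prop :=
  forall P : (Q -> Q) -> Prop,
    (forall y z g, cancel (beta z) g -> cancel g (beta z) -> P (beta y \o g)) ->
    P id ->
    (forall f1 f2, P f1 -> P f2 -> P (f1 \o f2)) ->
    (forall f1 g, P f1 -> cancel f1 g -> cancel g f1 -> P g) ->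
    (forall f1 f2, f1 =1 f2 -> P f1 -> P f2) ->
    P f.
End Quandles.

Definition quandle_hom (Q Q' : Type) (op : Q -> Q -> Q) (op' : Q' -> Q' -> Q')
    (h : Q -> Q') : Prop :=
  forall x y, h (op x y) = op' (h x) (h y).

Definition rel_MQ (mu : nat) (D : diagram mu) (Q : Type) (op : Q -> Q -> Q)
    (j : d_arc D -> Q) : Prop :=
  forall c : d_crossing D, op (j (under_r c)) (j (over c)) = j (under_l c).

(* (Q, op, iota) is MQ(L): the medial quandle generated by A(D) subject to
   a_2 |> a_1 = a_3 at every d_crossing (universal property of the presentation). *)
Definition is_MQ (mu : nat) (D : diagram mu) (Q : Type) (op : Q -> Q -> Q)
    (iota : d_arc D -> Q) : Prop :=
  [/\ is_quandle op, is_medial op, rel_MQ op iota &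
  forall (Q' : Type) (op' : Q' -> Q' -> Q') (j : d_arc D -> Q'),
    is_quandle op' -> is_medial op' -> rel_MQ op' j ->
    exists h : Q -> Q',
      [/\ quandle_hom op op' h, (forall a, h (iota a) = j a) &
          (forall h' : Q -> Q', quandle_hom op op' h' ->
             (forall a, h' (iota a) = j a) -> h' =1 h)]].

(* Main.v *)
Require Import Defs.
From HB Require Import structures.
From mathcomp Require Import all_boot all_algebra.
From mathcomp Require Import boolp.
Import GRing.Theory.
Local Open Scope ring_scope.

Module Helpers.
Set Implicit Arguments. Unset Strict Implicit. Unset Printing Implicit Defensive.

Section QuandleFacts.
Variables (Q : Type) (op : Q -> Q -> Q).
Hypothesis (Hq : is_quandle op) (Hm : is_medial op).

Local Notation bq := (beta op).

Lemma bq_bij y : exists g, cancel (bq y) g /\ cancel g (bq y).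
Proof. case: Hq => _ /(_ y) [g H1 H2] _; by exists g. Qed.

Definition gq y : Q -> Q := projT1 (cid (bq_bij y)).
Lemma gqK y : cancel (bq y) (gq y).
Proof. by case: (projT2 (cid (bq_bij y))). Qed.
Lemma gqKV y : cancel (gq y) (bq y).
Proof. by case: (projT2 (cid (bq_bij y))). Qed.

Lemma inv_uniq (f g1 g2 : Q -> Q) : cancel f g1 -> cancel g2 f -> g1 =1 g2.
Proof. by move=> H1 H2 q; rewrite -{1}(H2 q) H1. Qed.

Lemma distr y x u : bq (op y x) (bq x u) = bq x (bq y u).
Proof. case: Hq => _ _ H; by rewrite /beta -H. Qed.

Lemma distr' y x v : bq (op y x) v = bq x (bq y (gq x v)).
Proof. by rewrite -distr gqKV. Qed.

Lemma med_comm x y z u : bq y (gq z (bq x u)) = bq x (gq z (bq y u)).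
Proof.
have := Hm u x y z.
have E1 : op (op u x) (op y z) = bq (op y z) (bq x u) by [].
have E2 : op (op u y) (op x z) = bq (op x z) (bq y u) by [].
rewrite E1 E2 !distr' => /(congr1 (gq z)); by rewrite !gqK.
Qed.

Lemma DisG y z g : cancel (bq z) g -> cancel g (bq z) -> Dis op (bq y \o g).
Proof. move=> H1 H2 P HG _ _ _ _; exact: (HG y z g H1 H2). Qed.
Lemma Dis_id : Dis op id.
Proof. by move=> P HG Hid. Qed.
Lemma Dis_comp f1 f2 : Dis op f1 -> Dis op f2 -> Dis op (f1 \o f2).
Proof. move=> D1 D2 P HG Hid Hc Hi He; apply: (Hc); [exact: (D1 P HG Hid Hc Hi He)|exact: (D2 P HG Hid Hc Hi He)]. Qed.
Lemma Dis_inv f g : Dis op f -> cancel f g -> cancel g f -> Dis op g.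
Proof. move=> D1 K1 K2 P HG Hid Hc Hi He; apply: (Hi _ _ _ K1 K2); exact: (D1 P HG Hid Hc Hi He). Qed.
Lemma Dis_ext f1 f2 : f1 =1 f2 -> Dis op f1 -> Dis op f2.
Proof. move=> E D1 P HG Hid Hc Hi He; apply: (He _ _ E); exact: (D1 P HG Hid Hc Hi He). Qed.

Definition comm (c f : Q -> Q) := forall q, c (f q) = f (c q).

Lemma comm_Dis c :
  (forall y z g, cancel (bq z) g -> cancel g (bq z) -> comm c (bq y \o g)) ->
  forall f, Dis op f -> comm c f.
Proof.
move=> HG f Df; apply: (Df (comm c)) => //.
- by move=> f1 f2 C1 C2 q /=; rewrite C1 C2.
- by move=> f1 g C1 K1 K2 q; rewrite -[LHS]K1 -C1 K2.
- by move=> f1 f2 E C1 q; rewrite -!E.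
Qed.

Lemma gen_comm y z g1 x w g2 :
  cancel (bq z) g1 -> cancel g1 (bq z) ->
  cancel (bq w) g2 -> cancel g2 (bq w) ->
  comm (bq y \o g1) (bq x \o g2).
Proof.
move=> K1 K1' K2 K2' q /=.
rewrite !(inv_uniq K1 (gqKV z)) !(inv_uniq K2 (gqKV w)).
rewrite med_comm; congr (bq x _).
set A := gq z _; set B := gq w _.
have HA : bq w (gq y (bq z A)) = q by rewrite /A gqKV gqK gqKV.
have HB : bq z (gq y (bq w B)) = q by rewrite /B gqKV gqK gqKV.
rewrite med_comm -HA in HB.
by move/(congr1 (gq w)): HB; rewrite !gqK => /(congr1 (bq y)); rewrite !gqKV
  => /(congr1 (gq z)); rewrite !gqK.
Qed.

Lemma Dis_comm f h : Dis op f -> Dis op h -> comm f h.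
Proof.
move=> Df Dh.
have S1 : forall y z g, cancel (bq z) g -> cancel g (bq z) ->
   forall f, Dis op f -> comm (bq y \o g) f.
  move=> y z g K1 K2; apply: comm_Dis => y' z' g' K1' K2'; exact: gen_comm.
apply: comm_Dis Dh => y z g K1 K2 q; symmetry; exact: S1.
Qed.

Lemma Dis_conj s f : Dis op f -> Dis op (bq s \o f \o gq s).
Proof.
move=> Df; apply: (Df (fun f => Dis op (bq s \o f \o gq s))).
- move=> y z g K1 K2.
  apply: (@Dis_ext (bq (op y s) \o (bq s \o g \o gq s))).
    by move=> q /=; rewrite distr.
  apply: (@DisG _ (op z s)).
    by move=> q /=; rewrite distr' gqK K1 gqKV.
  by move=> q /=; rewrite distr K2 gqKV.
- apply: Dis_ext Dis_id => q /=; by rewrite gqKV.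
- move=> f1 f2 D1 D2; apply: Dis_ext (Dis_comp D1 D2) => q /=; by rewrite gqK.
- move=> f1 g D1 K1 K2; apply: Dis_inv D1 _ _ => q /=; by rewrite ?gqK ?K1 ?K2 ?gqKV.
- move=> f1 f2 E D1; apply: Dis_ext D1 => q /=; by rewrite E.
Qed.

Lemma bq_gq s y u : bq (gq s y) u = gq s (bq y (bq s u)).
Proof.
have E : op (gq s y) s = y by exact: (gqKV s y).
have := distr (gq s y) s u; rewrite E => ->.
by rewrite gqK.
Qed.

Lemma Dis_conjI s f : Dis op f -> Dis op (gq s \o f \o bq s).
Proof.
move=> Df; apply: (Df (fun f => Dis op (gq s \o f \o bq s))).
- move=> y z g K1 K2.
  apply: (@Dis_ext (bq (gq s y) \o (gq s \o g \o bq s))).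
    by move=> q /=; rewrite bq_gq gqKV.
  apply: (@DisG _ (gq s z)).
    by move=> q /=; rewrite bq_gq gqKV K1 gqK.
  by move=> q /=; rewrite bq_gq gqKV K2 gqK.
- apply: Dis_ext Dis_id => q /=; by rewrite gqK.
- move=> f1 f2 D1 D2; apply: Dis_ext (Dis_comp D1 D2) => q /=; by rewrite gqKV.
- move=> f1 g D1 K1 K2; apply: Dis_inv D1 _ _ => q /=; by rewrite ?gqKV ?K1 ?K2 ?gqK.
- move=> f1 f2 E D1; apply: Dis_ext D1 => q /=; by rewrite E.
Qed.
End QuandleFacts.

Record MQd := MkMQd { mq_T : Type; mq_op : mq_T -> mq_T -> mq_T;
  mq_q : is_quandle mq_op; mq_m : is_medial mq_op }.

Section DisT.
Variable (X : MQd).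
Local Notation Q := (mq_T X).
Local Notation op := (@mq_op X).

Record disT := DisT { dfun : Q -> Q; dinv : Q -> Q;
  dK : cancel dfun dinv; dKV : cancel dinv dfun; dDis : Dis op dfun }.

Lemma disT_eq (x y : disT) : dfun x =1 dfun y -> x = y.
Proof.
case: x y => f g K KV Ds [f' g' K' KV' Ds'] /= H.
have ef := funext H; subst f'.
have eg : g = g' by apply: funext => q; rewrite -{1}[q](KV' q) K.
subst g'.
have -> : K = K' by apply: Prop_irrelevance.
have -> : KV = KV' by apply: Prop_irrelevance.
by have -> : Ds = Ds' by apply: Prop_irrelevance.
Qed.

Definition d0 : disT := @DisT id id (fun _ => erefl) (fun _ => erefl) (@Dis_id _ op).
Definition dadd (x y : disT) : disT.
refine (@DisT (dfun x \o dfun y) (dinv y \o dinv x) _ _ (Dis_comp (dDis x) (dDis y))).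
- by move=> q /=; rewrite !dK.
- by move=> q /=; rewrite !dKV.
Defined.
Definition dopp (x : disT) : disT :=
  @DisT (dinv x) (dfun x) (@dKV x) (@dK x) (Dis_inv (dDis x) (@dK x) (@dKV x)).

End DisT.

HB.instance Definition _ (X : MQd) := gen_eqMixin (disT X).
HB.instance Definition _ (X : MQd) := gen_choiceMixin (disT X).

Section DisZ.
Variable X : MQd.
Lemma daddA : associative (@dadd X).
Proof. by move=> x y z; apply: disT_eq. Qed.
Lemma daddC : commutative (@dadd X).
Proof. move=> x y; apply: disT_eq => q /=. apply: Dis_comm; [exact: mq_q|exact: mq_m|exact: dDis|exact: dDis]. Qed.
Lemma dadd0 : left_id (@d0 X) (@dadd X).
Proof. by move=> x; apply: disT_eq. Qed.
Lemma daddN : left_inverse (@d0 X) (@dopp X) (@dadd X).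
Proof. by move=> x; apply: disT_eq => q /=; rewrite dK. Qed.
End DisZ.

HB.instance Definition _ (X : MQd) := GRing.isZmodule.Build (disT X) (@daddA X) (@daddC X) (@dadd0 X) (@daddN X).

Section Test.
Variable X : MQd.
Lemma dfunD (x y : disT X) : dfun (x + y) = dfun x \o dfun y. Proof. by []. Qed.
Lemma dfunN (x : disT X) : dfun (- x) = dinv x. Proof. by []. Qed.
Lemma dfun0 : dfun (0 : disT X) = id. Proof. by []. Qed.
End Test.

Lemma add_0 (V W : zmodType) (f : V -> W) : additive_map f -> f 0 = 0.
Proof. move=> H; apply: (@addrI _ (f 0)); by rewrite -H !addr0. Qed.
Lemma add_N (V W : zmodType) (f : V -> W) : additive_map f -> forall x, f (- x) = - f x.
Proof.
move=> H x; by rewrite -[LHS]addr0 -(subrr (f x)) addrA -H addNr add_0 // add0r.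
Qed.
Lemma add_B (V W : zmodType) (f : V -> W) : additive_map f -> forall x y, f (x - y) = f x - f y.
Proof. by move=> H x y; rewrite H add_N. Qed.

Section Conj.
Variables (X : MQd) (s : mq_T X).
Local Notation Q := (mq_T X).
Local Notation op := (@mq_op X).
Local Notation bq := (beta op).
Local Notation gq := (gq (mq_q X)).
Local Notation W := (disT X).

Definition tw (x : W) : W.
refine (@DisT X (bq s \o dfun x \o gq s) (bq s \o dinv x \o gq s) _ _
  (Dis_conj (mq_q X) s (dDis x))).
- by move=> q /=; rewrite gqK dK gqKV.
- by move=> q /=; rewrite gqK dKV gqKV.
Defined.

Definition twi (x : W) : W.
refine (@DisT X (gq s \o dfun x \o bq s) (gq s \o dinv x \o bq s) _ _
  (Dis_conjI (mq_q X) s (dDis x))).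
- by move=> q /=; rewrite gqKV dK gqK.
- by move=> q /=; rewrite gqKV dKV gqK.
Defined.

Lemma tw_add : additive_map tw.
Proof. by move=> x y; apply: disT_eq => q /=; rewrite gqK. Qed.

Lemma twK : cancel tw twi.
Proof. by move=> x; apply: disT_eq => q /=; rewrite !gqK. Qed.
Lemma twiK : cancel twi tw.
Proof. by move=> x; apply: disT_eq => q /=; rewrite !gqKV. Qed.

Lemma tw_Lmod : is_Lmod tw.
Proof. split; [exact: tw_add | exact: Bijective twK twiK]. Qed.

Lemma tw_Lmu (mu : nat) : is_Lmu_mod (fun _ : 'I_mu => tw).
Proof. by split=> // _; exact: tw_Lmod. Qed.

Definition dq (y : Q) : W.
refine (@DisT X (bq y \o gq s) (bq s \o gq y) _ _ (DisG y (gqK (mq_q X) s) (gqKV (mq_q X) s))).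
- by move=> q /=; rewrite gqK gqKV.
- by move=> q /=; rewrite gqK gqKV.
Defined.

Lemma dq_s : dq s = 0.
Proof. by apply: disT_eq => q /=; rewrite gqKV. Qed.

Lemma dq_op x y : dq (op x y) = dq y + tw (dq x) - tw (dq y).
Proof.
apply: disT_eq => q /=.
rewrite -[op x y]/(bq y x) (distr' (mq_q X)).
by rewrite !gqK.
Qed.

End Conj.

Lemma sigE (A : Type) (P : A -> Prop) (a b : {x | P x}) : sval a = sval b -> a = b.
Proof. case: a b => x px [y py] /= e; subst y; by rewrite (Prop_irrelevance px py). Qed.

Lemma MQ_gen (mu : nat) (D : diagram mu) (Q : Type) (op : Q -> Q -> Q)
  (iota : d_arc D -> Q) (Hmq : is_MQ op iota) (S : Q -> Prop) :
  (forall a, S (iota a)) ->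
  (forall x y, S x -> S y -> S (op x y)) ->
  (forall (Hq : is_quandle op) x y, S x -> S y -> S (gq Hq y x)) ->
  forall q, S q.
Proof.
case: Hmq => Hq Hm Hrel HU Hi Hop Hinv.
pose T := {x | S x}.
pose opS (a b : T) : T := exist _ (op (sval a) (sval b)) (Hop _ _ (proj2_sig a) (proj2_sig b)).
pose iS a : T := exist _ (iota a) (Hi a).
have qS : is_quandle opS.
  case: (Hq) => H1 H2 H3; split.
  - by move=> x; apply: sigE => /=; rewrite H1.
  - move=> y.
    pose g (u : T) : T := exist _ (gq Hq (sval y) (sval u)) (Hinv Hq _ _ (proj2_sig u) (proj2_sig y)).
    exists g => u; apply: sigE => /=.
      exact: (gqK Hq (sval y) (sval u)).
    exact: (gqKV Hq (sval y) (sval u)).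
  - by move=> x y z; apply: sigE => /=; rewrite H3.
have mS : is_medial opS by move=> w x y z; apply: sigE => /=; rewrite Hm.
have rS : rel_MQ opS iS by move=> c; apply: sigE => /=; rewrite Hrel.
have [h [hh hi _]] := HU _ _ _ qS mS rS.
have [h0 [_ _ U]] := HU _ _ _ Hq Hm Hrel.
have E1 : (fun q : Q => q) =1 h0 by apply: U.
have E2 : (fun q => sval (h q)) =1 h0.
  apply: U; last by move=> a /=; rewrite hi.
  by move=> x y /=; rewrite hh.
move=> q; rewrite (E1 q) -E2; exact: proj2_sig.
Qed.
End Helpers.
Import Helpers.

Lemma alg_lem (V : zmodType) (a b c : V) : a + b - c - a + c = b.
Proof. by rewrite addrAC subrK (addrC a) addrK. Qed.

Theorem corollary30 (mu : nat) (D : diagram mu)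
  (M : zmodType) (ts : 'I_mu -> M -> M) (gamma : d_arc D -> M)
  (N : zmodType) (t : N -> N) (phi : M -> N)
  (Q : Type) (op : Q -> Q -> Q) (iota : d_arc D -> Q)
  (astar : d_arc D) :
  is_MA ts gamma -> is_base_change ts t phi -> is_MQ op iota ->
  let M0 := submod_gen t (fun x => exists a, x = phi (gamma a - gamma astar)) in
  let bstar := beta op (iota astar) in
  exists e : N -> Q -> Q,
    [/\ (forall x, M0 x -> Dis op (e x)),
        (forall x y, M0 x -> M0 y -> e (x + y) =1 e x \o e y),
        (forall x g, M0 x -> cancel bstar g -> cancel g bstar ->
           e (t x) =1 bstar \o e x \o g),
        (forall d, Dis op d -> exists2 x, M0 x & e x =1 d) &
        (forall a g, cancel bstar g -> cancel g bstar ->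
           e (phi (gamma a - gamma astar)) =1 beta op (iota a) \o g)].
Proof.
move=> HMA HBC HMQ M0 bstar.
case: (HMQ) => Hq Hm Hrel HUq.
pose X := MkMQd Hq Hm.
pose s : mq_T X := iota astar.
case: HMA => HLmu [HrelM HUM].
have relW : rel_MA (fun _ => @tw X s) (fun a => @dq X s (iota a)).
  move=> c; rewrite -Hrel (@dq_op X s).
  by apply/eqP; rewrite subr_eq0 addrAC.
have [f [fadd fts fgam _]] := HUM (disT X) (fun _ => @tw X s) (fun a => @dq X s (iota a)) (@tw_Lmu X s mu) relW.
case: HBC => Hlt phiadd phits HBU.
have [F [Fadd Ft Fphi _]] := HBU (disT X) (@tw X s) f (@tw_Lmod X s) fadd fts.
case: Hlt => tadd [ti tK tiK].
exists (fun x => dfun (F x)).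
have M0g : forall a, M0 (phi (gamma a - gamma astar)).
  by move=> a P HS H0 HB Ht Hti; apply: HS; exists a.
have M0B : forall x y, M0 x -> M0 y -> M0 (x - y).
  move=> x y Hx Hy P HS H0 HB Ht Hti; exact: (HB _ _ (Hx P HS H0 HB Ht Hti) (Hy P HS H0 HB Ht Hti)).
have M00 : M0 0 by move=> P HS H0 HB Ht Hti.
have M0t : forall x, M0 x -> M0 (t x).
  move=> x Hx P HS H0 HB Ht Hti; exact: (Ht _ (Hx P HS H0 HB Ht Hti)).
have M0ti : forall x, M0 x -> M0 (ti x).
  move=> x Hx P HS H0 HB Ht Hti; apply: (Hti); rewrite tiK; exact: (Hx P HS H0 HB Ht Hti).
have M0N : forall x, M0 x -> M0 (- x).
  by move=> x Hx; rewrite -sub0r; apply: M0B.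
have M0D : forall x y, M0 x -> M0 y -> M0 (x + y).
  by move=> x y Hx Hy; rewrite -[y]opprK; apply: M0B => //; apply: M0N.
have Fti : forall n, F (ti n) = @twi X s (F n).
  by move=> n; have := Ft (ti n); rewrite tiK => ->; rewrite twK.
have Fdef : forall a, F (phi (gamma a - gamma astar)) = @dq X s (iota a).
  by move=> a; rewrite Fphi (add_B fadd) !fgam dq_s subr0.
have SQ : forall q, exists x, M0 x /\ F x = @dq X s q.
  apply: (MQ_gen HMQ).
  - move=> a; exists (phi (gamma a - gamma astar)); split; [exact: M0g | exact: Fdef].
  - move=> x y [u [Mu Fu]] [v [Mv Fv]]; exists (v + t u - t v); split.
      by apply: M0B; [apply: M0D; [done | apply: M0t] | apply: M0t].
    by rewrite (add_B Fadd) Fadd !Ft Fu Fv (@dq_op X s).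
  - move=> Hq' x y [u [Mu Fu]] [v [Mv Fv]].
    rewrite (Prop_irrelevance Hq' Hq).
    exists (ti (u - v + t v)); split.
      by apply: M0ti; apply: M0D; [apply: M0B | apply: M0t].
    rewrite Fti Fadd (add_B Fadd) Ft Fu Fv.
    have Ex : @dq X s x = @dq X s y + @tw X s (@dq X s (gq Hq y x)) - @tw X s (@dq X s y).
      rewrite -(@dq_op X s); congr (@dq X s _); exact: (esym (gqKV Hq y x)).
    by rewrite Ex alg_lem twK.
split.
- move=> x _; exact: (dDis (F x)).
- by move=> x y _ _ q; rewrite Fadd.
- by move=> x g _ K1 K2 q; rewrite Ft /= (inv_uniq (gqK Hq s) K2).
- move=> d Dd; apply: (Dd (fun f => exists2 x, M0 x & dfun (F x) =1 f)).
  + move=> y z g K1 K2.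
    have [u [Mu Fu]] := SQ y; have [v [Mv Fv]] := SQ z.
    exists (u - v); first exact: M0B.
    move=> q; rewrite (add_B Fadd) Fu Fv /=.
    by rewrite gqK (inv_uniq (gqK Hq z) K2).
  + by exists 0 => // q; rewrite (add_0 Fadd).
  + move=> f1 f2 [x1 M1 E1] [x2 M2 E2]; exists (x1 + x2); first exact: M0D.
    by move=> q; rewrite Fadd dfunD /= E2 E1.
  + move=> f1 g [x1 M1 E1] K1 K2; exists (- x1); first exact: M0N.
    move=> q; rewrite (add_N Fadd) dfunN.
    by rewrite -[in RHS](dKV (F x1) q) E1 K1.
  + by move=> f1 f2 E [x Mx Ex]; exists x => // q; rewrite Ex E.
- by move=> a g K1 K2 q; rewrite Fdef /= (inv_uniq (gqK Hq s) K2).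
Qed.
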